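(* There is no (possibly randomized) transaction fee mechanism with non-trivial miner revenue that satisfies both UIC and $1$-SCP. This holds whether the block size $B$ is finite or infinite.
   Context: Setting (transaction fee mechanism, TFM). Each user $i$ has a private true value $v_i\ge 0$ for having its transaction confirmed in the next block and submits a single bid $b_i\ge 0$; a bid vector is $\mathbf b=(b_1,\dots,b_m)$, $\mathbf b_{-i}$ denotes all bids except $b_i$, and $(\mathbf b_{-i},b_i')$ the vector with $b_i$ replaced by $b_i'$. A block contains at most $B$ transactions ($B$ a positive integer, or $B=\infty$). A TFM consists of an inclusion rule (run by the miner) selecting at most $B$ bids to include in the block, and a confirmation rule, payment rule and miner-revenue rule (run by the blockchain, using only the included bids) deciding which included bids are confirmed, what each confirmed bid pays (at most its bid; unconfirmed bids pay $0$), and what the miner receives (at most the total payment of confirmed bids; any remainder is ''burnt''). Rules may be randomized; the mechanism treats users symmetrically (swapping two users' bids swaps their outcomes). Composing the honest inclusion rule with the other rules gives $(\mathbf x,\mathbf p,\mu)$: $x_i(\mathbf b)\in[0,1]$ is the probability user $i$ is confirmed, $p_i(\mathbf b)$ its expected payment, $\mu(\mathbf b)$ the miner's expected revenue. The TFM has non-trivial miner revenue if $\mu$ is not identically $0$. Strategic behavior: a strategic player is a single user, the miner, or a coalition of the miner with some users; it may have its users bid untruthfully after seeing all other bids, inject fake bids (true value $0$), and, if it contains the miner, include any set of at most $B$ available bids instead of following the inclusion rule. Ordinary utility of a player: miner's revenue (if the miner belongs to the player) plus $v-p$ for each confirmed transaction of the player with true value $v$ and payment $p$. UIC: assuming the miner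 follows the mechanism, each user's expected utility is maximized by bidding truthfully (no fake bids), whatever the other bids. $c$-SCP: for every coalition of the miner and between $1$ and $c$ users, the expected joint utility is maximized when its users bid truthfully and the miner follows the mechanism, whatever the other users' bids. *)

(* Defs.v *)
From HB Require Import structures.
From mathcomp Require Import all_boot all_order all_algebra.
From mathcomp Require Import reals.
Set Implicit Arguments. Unset Strict Implicit. Unset Printing Implicit Defensive.
Import Order.TTheory GRing.Theory Num.Theory.
Local Open Scope ring_scope.

Section TFM.
Variable R : realType.

(** Block size: [Some n] is a finite block size n (must be positive),
    [None] is B = infinity. *)
Definition block_ok (B : option nat) : bool :=
  if B is Some n then (0 < n)%N else true.
Definition fits (B : option nat) (k : nat) : bool :=
  if B is Some n then (k <= n)%N else true.

Definition nonneg (b : seq R) : bool := all (fun x => 0 <= x) b.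

(** A (possibly randomized) TFM, described through expectations.
    - [incl b s] : probability that the honest inclusion rule, on bid vector
      [b], includes exactly the bids selected by the mask [s];
    - [conf c j], [pay c j], [rev c] : confirmation probability and expected
      payment of the j-th bid of an included block [c], and expected miner
      revenue, as computed by the blockchain from the block [c] alone. *)
Record TFM := MkTFM {
  incl : forall b : seq R, (size b).-tuple bool -> R;
  conf : seq R -> nat -> R;
  pay  : seq R -> nat -> R;
  rev  : seq R -> R }.
Arguments incl t b s : clear implicits.

Variable M : TFM.

Definition valid_TFM (B : option nat) : Prop :=
  (forall b : seq R, nonneg b ->
     (forall s, 0 <= incl M b s) /\
     (\sum_(s : (size b).-tuple bool) incl M b s = 1) /\
     (forall s, incl M b s != 0 -> fits B (count id s))) /\
  (forall c : seq R, nonneg c -> fits B (size c) ->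
     (forall j, (j < size c)%N ->
        0 <= conf M c j <= 1 /\ pay M c j <= nth 0 c j * conf M c j) /\
     0 <= rev M c /\ rev M c <= \sum_(j < size c) pay M c j).

(** position of the i-th bid of [b] inside the block [mask s b] *)
Definition rank (s : seq bool) (i : nat) : nat := count id (take i s).

Definition xb (a : seq R) (s : seq bool) (i : nat) : R :=
  if nth false s i then conf M (mask s a) (rank s i) else 0.
Definition pb (a : seq R) (s : seq bool) (i : nat) : R :=
  if nth false s i then pay M (mask s a) (rank s i) else 0.

Definition hx (b : seq R) (i : nat) : R :=
  \sum_(s : (size b).-tuple bool) incl M b s * xb b s i.
Definition hp (b : seq R) (i : nat) : R :=
  \sum_(s : (size b).-tuple bool) incl M b s * pb b s i.
Definition hmu (b : seq R) : R :=
  \sum_(s : (size b).-tuple bool) incl M b s * rev M (mask s b).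

Definition swap (b : seq R) (j k : nat) : seq R :=
  set_nth 0 (set_nth 0 b j (nth 0 b k)) k (nth 0 b j).
Definition swapi (j k l : nat) : nat :=
  if l == j then k else if l == k then j else l.

Definition tfm_symmetric : Prop :=
  forall b : seq R, nonneg b -> forall j k l : nat,
    (j < size b)%N -> (k < size b)%N -> (l < size b)%N ->
    hx (swap b j k) l = hx b (swapi j k l) /\
    hp (swap b j k) l = hp b (swapi j k l) /\
    hmu (swap b j k) = hmu b.

Definition repl (b : seq R) (U : seq nat) (w : nat -> R) : seq R :=
  [seq if j \in U then w j else nth 0 b j | j <- iota 0 (size b)].

(** UIC: the miner follows the mechanism; user i with true value v may bid
    any b' and inject any fake bids f; other bids [b] arbitrary. *)
Definition UIC : Prop :=
  forall (b : seq R) (i : nat) (v b' : R) (f : seq R),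
    nonneg b -> (i < size b)%N -> 0 <= v -> 0 <= b' -> nonneg f ->
    let bh := repl b [:: i] (fun _ => v) in
    let a := repl b [:: i] (fun _ => b') ++ f in
    v * hx a i - hp a i - \sum_(k < size f) hp a (size b + k)
      <= v * hx bh i - hp bh i.

(** c-SCP: coalition of the miner with users U (1 <= |U| <= c) of true values
    v; deviation: bids w for U, fake bids f, and the miner includes any set
    (mask s) of at most B available bids.  (Randomized deviations are convex
    combinations of these deterministic ones.) *)
Definition SCP (B : option nat) (c : nat) : Prop :=
  forall (b : seq R) (U : seq nat) (v w : nat -> R) (f : seq R),
    nonneg b -> uniq U -> all (fun j => j < size b)%N U ->
    (1 <= size U <= c)%N ->
    (forall j, j \in U -> 0 <= v j) -> (forall j, j \in U -> 0 <= w j) ->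
    nonneg f ->
    let bh := repl b U v in
    let a := repl b U w ++ f in
    forall s : (size a).-tuple bool, fits B (count id s) ->
      rev M (mask s a) + \sum_(j <- U) (v j * xb a s j - pb a s j)
        - \sum_(k < size f) pb a s (size b + k)
      <= hmu bh + \sum_(j <- U) (v j * hx bh j - hp bh j).

Definition nontrivial_revenue : Prop :=
  exists b : seq R, nonneg b /\ hmu b != 0.

End TFM.

(* Main.v *)
Require Import Defs.
From mathcomp Require Import all_boot all_order all_algebra reals.
From mathcomp Require Import ring lra.
Set Implicit Arguments. Unset Strict Implicit. Unset Printing Implicit Defensive.
Import Order.TTheory GRing.Theory Num.Theory.
Local Open Scope ring_scope.

Lemma myerson (R : realType) (X P Mu : R -> R) :
  (forall v w, 0 <= v -> 0 <= w -> v * X w - P w <= v * X v - P v) ->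
  (forall v w, 0 <= v -> 0 <= w -> Mu w + v * X w - P w <= Mu v + v * X v - P v) ->
  forall w w', 0 <= w -> w <= w' -> Mu w' = Mu w.
Proof.
move=> HU HS.
have step : forall w w', 0 <= w -> w <= w' ->
   Mu w' - Mu w <= (w' - w) * (X w' - X w) /\ Mu w - Mu w' <= (w' - w) * (X w' - X w).
  move=> w w' w0 ww'; have w'0 : 0 <= w' by apply: le_trans ww'.
  have h1 := HU w' w w'0 w0; have h2 := HU w w' w0 w'0.
  have h3 := HS w' w w'0 w0; have h4 := HS w w' w0 w'0.
  split; nra.
have ind : forall w d n, 0 <= w -> 0 <= d ->
   Mu (w + n%:R * d) - Mu w <= d * (X (w + n%:R * d) - X w) /\
   Mu w - Mu (w + n%:R * d) <= d * (X (w + n%:R * d) - X w).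
  move=> w d n w0 d0; elim: n => [|n [IH1 IH2]].
    by rewrite mul0r addr0 !subrr mulr0.
  have t0 : 0 <= w + n%:R * d by rewrite addr_ge0 // mulr_ge0.
  have e : w + n.+1%:R * d = (w + n%:R * d) + d by rewrite -natr1 mulrDl mul1r addrA.
  have le1 : w + n%:R * d <= w + n%:R * d + d by rewrite lerDl.
  have [s1 s2] := step _ _ t0 le1.
  have e2 : w + n%:R * d + d - (w + n%:R * d) = d by ring.
  rewrite e; rewrite e2 in s1 s2.
  split; lra.
move=> w w' w0 ww'.
set K := (w' - w) * (X w' - X w).
have bnd : forall n : nat, `|Mu w' - Mu w| * n.+1%:R <= K.
  move=> n.
  have d0 : 0 <= (w' - w) / n.+1%:R by rewrite divr_ge0 // subr_ge0.
  have [i1 i2] := ind w _ n.+1 w0 d0.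
  have e : w + n.+1%:R * ((w' - w) / n.+1%:R) = w'.
    by rewrite mulrC divfK ?pnatr_eq0 // addrC subrK.
  rewrite e in i1 i2.
  have np : 0 < n.+1%:R :> R by rewrite ltr0n.
  rewrite -ler_pdivlMr //; have eK : K / n.+1%:R = (w' - w) / n.+1%:R * (X w' - X w) by rewrite /K mulrAC.
  rewrite eK.
  by case: (lerP 0 (Mu w' - Mu w)) => h; [rewrite ger0_norm | rewrite ltr0_norm // opprB].
apply/eqP; rewrite -subr_eq0; apply: contraT => nz.
have np : 0 < `|Mu w' - Mu w| by rewrite normr_gt0.
have K0 : 0 <= K / `|Mu w' - Mu w|.
  by rewrite divr_ge0 // (le_trans _ (bnd 0%N)) // mulr_ge0.
have := archi_boundP K0; set m := Num.Def.archi_bound _ => hm.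
have := bnd m; rewrite -ler_pdivlMl // => hb.
have : (m%:R : R) < m.+1%:R by rewrite ltr_nat.
lra.
Qed.

Section Mech.
Variable R : realType.
Variable M : TFM R.
Variable B : option nat.
Hypothesis Hv : valid_TFM M B.

Lemma size_repl (b : seq R) U w : size (repl b U w) = size b.
Proof. by rewrite size_map size_iota. Qed.

Lemma nth_repl (b : seq R) U w j : nth 0 (repl b U w) j =
  if (j < size b)%N then (if j \in U then w j else nth 0 b j) else 0.
Proof.
case: ltnP => hj; last by rewrite nth_default // size_repl.
by rewrite (nth_map 0%N) ?size_iota // nth_iota.
Qed.

Lemma nonneg_repl (b : seq R) i t : nonneg b -> 0 <= t ->
  nonneg (repl b [:: i] (fun _ => t)).
Proof.
move=> /allP hb t0; apply/(all_nthP 0) => j; rewrite size_repl => hj.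
rewrite nth_repl hj; case: ifP => // _; apply: hb; exact: mem_nth.
Qed.

Lemma repl_self (b : seq R) i : repl b [:: i] (fun _ => nth 0 b i) = b.
Proof.
apply: (@eq_from_nth _ 0); rewrite ?size_repl // => j hj.
rewrite nth_repl hj inE; by case: eqP => [->|].
Qed.

Lemma repl_out (b : seq R) i f : (size b <= i)%N -> repl b [:: i] f = b.
Proof.
move=> hi; apply: (@eq_from_nth _ 0); rewrite ?size_repl // => j hj.
rewrite nth_repl hj inE; case: eqP => // ej; subst; by rewrite ltnNge hi in hj.
Qed.

Lemma wavg (a : seq R) (F : (size a).-tuple bool -> R) (K : R) : nonneg a ->
  (forall s : (size a).-tuple bool, fits B (count id s) -> F s <= K) ->
  \sum_(s : (size a).-tuple bool) @incl _ M a s * F s <= K.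
Proof.
move=> ha hF; have [h0 [h1 h2]] := Hv.1 a ha.
apply: (@le_trans _ _ (\sum_(s : (size a).-tuple bool) @incl _ M a s * K)).
  apply: ler_sum => s _; have [->|nz] := eqVneq (@incl _ M a s) 0.
    by rewrite !mul0r.
  by rewrite ler_wpM2l // hF // h2.
by rewrite -mulr_suml h1 mul1r.
Qed.


Definition bt (b : seq R) i (t : R) := repl b [:: i] (fun _ => t).

Lemma uic_step (b : seq R) i v w : UIC M -> nonneg b -> (i < size b)%N ->
  0 <= v -> 0 <= w ->
  v * hx M (bt b i w) i - hp M (bt b i w) i <= v * hx M (bt b i v) i - hp M (bt b i v) i.
Proof.
move=> HU hb hi v0 w0; have := HU b i v w [::] hb hi v0 w0 is_true_true.
by rewrite /= cats0 big_ord0 subr0.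
Qed.

Lemma scp_step (b : seq R) i v w : SCP M B 1 -> nonneg b -> (i < size b)%N ->
  0 <= v -> 0 <= w ->
  hmu M (bt b i w) + v * hx M (bt b i w) i - hp M (bt b i w) i <=
  hmu M (bt b i v) + v * hx M (bt b i v) i - hp M (bt b i v) i.
Proof.
move=> HS hb hi v0 w0.
have := HS b [:: i] (fun _ => v) (fun _ => w) [::] hb is_true_true.
rewrite /= hi => /(_ is_true_true is_true_true (fun _ _ => v0) (fun _ _ => w0) is_true_true).
rewrite cats0 => H.
have -> : hmu M (bt b i w) + v * hx M (bt b i w) i - hp M (bt b i w) i =
  \sum_(s : (size (bt b i w)).-tuple bool) @incl _ M (bt b i w) s *
     (Defs.rev M (mask s (bt b i w)) + (v * xb M (bt b i w) s i - pb M (bt b i w) s i)).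
  rewrite /hmu /hx /hp mulr_sumr -big_split -sumrB /=; apply: eq_bigr => s _; ring.
apply: wavg; first exact: nonneg_repl.
move=> s fs; have := H s fs.
rewrite big_seq1 big_ord0 subr0 big_seq1 /bt; lra.
Qed.


Lemma hmu_bt (b : seq R) i t : UIC M -> SCP M B 1 -> nonneg b -> 0 <= t ->
  hmu M (bt b i t) = hmu M b.
Proof.
move=> HU HS hb t0.
case: (ltnP i (size b)) => hi; last by rewrite /bt repl_out.
have := myerson (X := fun t => hx M (bt b i t) i) (P := fun t => hp M (bt b i t) i)
   (Mu := fun t => hmu M (bt b i t)).
move=> /(_ (fun v w v0 w0 => uic_step HU hb hi v0 w0) (fun v w v0 w0 => scp_step HS hb hi v0 w0)) /= H.
have bi0 : 0 <= nth 0 b i by move/allP: hb; apply; exact: mem_nth.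
rewrite -{2}(repl_self b i) -/(bt b i (nth 0 b i)).
case: (lerP t (nth 0 b i)) => h; first by rewrite (H _ _ t0 h).
by rewrite (H _ _ bi0 (ltW h)).
Qed.

Definition zk (b : seq R) k := repl b (iota 0 k) (fun _ => 0).

Lemma zk_step (b : seq R) k : zk b k.+1 = bt (zk b k) k 0.
Proof.
apply: (@eq_from_nth _ 0); rewrite ?size_repl // => j hj.
rewrite /zk /bt !nth_repl size_repl hj.
rewrite !mem_iota !add0n !leq0n /= inE ltnS leq_eqVlt; by case: (j == k).
Qed.

Lemma nonneg_zk (b : seq R) k : nonneg b -> nonneg (zk b k).
Proof.
move=> /allP hb; apply/(all_nthP 0) => j; rewrite size_repl => hj.
rewrite nth_repl hj; case: ifP => // _; apply: hb; exact: mem_nth.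
Qed.

Lemma zk_full (b : seq R) : zk b (size b) = nseq (size b) 0.
Proof.
apply: (@eq_from_nth _ 0); rewrite ?size_repl ?size_nseq // => j hj.
by rewrite nth_repl hj mem_iota /= hj nth_nseq hj.
Qed.

Lemma zk0 (b : seq R) : zk b 0 = b.
Proof. by rewrite /zk /repl /= -/(mkseq _ _) mkseq_nth. Qed.

Lemma hmu_nseq n : hmu M (nseq n 0) = 0.
Proof.
rewrite /hmu big1 // => s _.
have hn : nonneg (nseq n (0:R)) by apply/allP => x; rewrite mem_nseq => /andP [_ /eqP ->].
have [h0 [h1 h2]] := Hv.1 _ hn.
have [->|nz] := eqVneq (@incl _ M _ s) 0; first by rewrite mul0r.
set c := mask s _.
have cz : forall x, x \in c -> x = 0 by move=> x /mem_mask; rewrite mem_nseq => /andP [_ /eqP].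
have cn : nonneg c by apply/allP => x /cz ->.
have cs : size c = count id s by rewrite size_mask // size_tuple.
have fc : fits B (size c) by rewrite cs h2.
have [hc [r0 rle]] := Hv.2 c cn fc.
have : \sum_(j < size c) pay M c j <= 0.
  apply: (@le_trans _ _ (\sum_(j < size c) (0:R))); last by rewrite big1_eq.
  apply: ler_sum => j _; have [_ hp] := hc j (ltn_ord j).
  by rewrite (cz (nth 0 c j)) ?mem_nth // mul0r in hp.
move=> hs; have -> : Defs.rev M c = 0 by apply/eqP; rewrite eq_le r0 (le_trans rle hs).
by rewrite mulr0.
Qed.

End Mech.

Theorem mainTheorem1 (R : realType) (B : option nat) (M : TFM R) :
  block_ok B -> valid_TFM M B -> tfm_symmetric M ->
  ~ (nontrivial_revenue M /\ UIC M /\ SCP M B 1).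
Proof.
move=> _ Hv _ [[b [hb nz]] [HU HS]].
have H : forall k, hmu M (zk b k) = hmu M b.
  elim => [|k IH]; first by rewrite zk0.
  by rewrite zk_step (hmu_bt Hv) // nonneg_zk.
move: (H (size b)); rewrite zk_full (hmu_nseq Hv) => e.
by rewrite -e eqxx in nz.
Qed.
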